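(* Let $N\ge1$ be an integer and $0<y<1$. Define $\eta\in\mathbb{R}$ by $-\tfrac12\eta^2=\ln[4y(1-y)]$ with $\operatorname{sign}(\eta)=\operatorname{sign}(\tfrac12-y)$ (and $\eta=0$ if $y=\tfrac12$). Then $$I_{1-y}(N,N)=\sqrt{\frac{N}{2\pi}}\;\Phi(N)\int_{-\infty}^{\eta}e^{-\frac12 N\zeta^2}\,\phi(\zeta)\,d\zeta,$$ where $$\Phi(N)=\frac{1}{\sqrt N}\,\frac{\Gamma(N+\tfrac12)}{\Gamma(N)},\qquad \phi(\zeta)=\sqrt{\frac{\tfrac12\zeta^2}{1-\exp(-\tfrac12\zeta^2)}}\ \ (\phi(0)=1),$$ the square root being positive.
   Context: $I_x(a,b)=\frac{1}{B(a,b)}\int_0^x t^{a-1}(1-t)^{b-1}dt$ is the regularized incomplete beta function, $B(a,b)=\Gamma(a)\Gamma(b)/\Gamma(a+b)$. *)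

(* Defs.v *)
From Stdlib Require Import Reals.
From Coquelicot Require Import Coquelicot.
Open Scope R_scope.

Definition Gamma (s : R) : R :=
  RInt_gen (fun t => Rpower t (s - 1) * exp (- t)) (at_right 0) (Rbar_locally p_infty).

Definition Beta (a b : R) : R := Gamma a * Gamma b / Gamma (a + b).

Definition incBeta (x a b : R) : R :=
  / Beta a b *
  RInt_gen (fun t => Rpower t (a - 1) * Rpower (1 - t) (b - 1)) (at_right 0) (at_point x).

Definition PhiN (N : R) : R := / sqrt N * (Gamma (N + /2) / Gamma N).

Definition phi (z : R) : R :=
  if Req_EM_T z 0 then 1
  else sqrt ((/2 * z ^ 2) / (1 - exp (- (/2 * z ^ 2)))).

(* Main.v *)
Require Import Defs.
From Stdlib Require Import Reals Lra Lia Factorial.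
From Coquelicot Require Import Coquelicot.
Open Scope R_scope.

Lemma ball_R (l e y : R) : ball l e y <-> Rabs (y - l) < e.
Proof. reflexivity. Qed.

Lemma is_RInt_gen_antider {Fa Fb : (R -> Prop) -> Prop} {FFa : Filter Fa} {FFb : Filter Fb}
  (f G : R -> R) (la lb : R) :
  filter_prod Fa Fb (fun ab => is_RInt f (fst ab) (snd ab) (G (snd ab) - G (fst ab))) ->
  filterlim G Fa (locally la) -> filterlim G Fb (locally lb) ->
  is_RInt_gen f Fa Fb (lb - la).
Proof.
  intros H Ha Hb P HP.
  assert (Hl : filterlim (fun ab : R*R => G (snd ab) - G (fst ab)) (filter_prod Fa Fb) (locally (lb - la))).
  { apply (filterlim_comp_2 (G:=locally lb) (H:=locally (opp la)) (fun ab : R*R => G (snd ab)) (fun ab : R*R => opp (G (fst ab))) plus).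
    - eapply filterlim_comp. apply filterlim_snd. exact Hb.
    - eapply filterlim_comp. eapply filterlim_comp. apply filterlim_fst. exact Ha.
      apply (filterlim_opp la).
    - apply (filterlim_plus lb (opp la)). }
  assert (Hl' : filter_prod Fa Fb (fun ab : R*R => P (G (snd ab) - G (fst ab)))) by exact (Hl P HP).
  unfold filtermapi.
  generalize (filter_and _ _ H Hl'). apply filter_imp. intros [a b] [H1 H2].
  exists (G b - G a). split; auto.
Qed.

Lemma cont_to_pt (f : R -> R) x : continuous f x -> continuity_pt f x.
Proof. intros H; apply continuity_pt_filterlim; exact H. Qed.

Lemma FTC_open (G g : R -> R) (a b : R) : a <= b ->
  (forall x, a <= x <= b -> continuous G x) ->
  (forall x, a < x < b -> is_derive G x (g x)) ->
  (forall x, a <= x <= b -> continuous g x) ->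
  is_RInt g a b (G b - G a).
Proof.
  intros Hab HG Hd Hg.
  set (cl := fun x => (Rabs (x - a) - Rabs (x - b) + a + b) / 2).
  assert (Hcl : forall x, a <= cl x <= b).
  { intros x; unfold cl; unfold Rabs; repeat destruct Rcase_abs; lra. }
  assert (Hcl2 : forall x, a <= x <= b -> cl x = x).
  { intros x Hx; unfold cl; unfold Rabs; repeat destruct Rcase_abs; lra. }
  assert (Hclc : forall x, continuous cl x).
  { intros x; apply continuity_pt_filterlim; unfold cl.
    apply continuity_pt_mult; [|apply continuity_pt_const; intros u v; reflexivity].
    apply continuity_pt_plus; [|apply continuity_pt_const; intros u v; reflexivity].
    apply continuity_pt_plus; [|apply continuity_pt_const; intros u v; reflexivity].
    apply continuity_pt_minus.
    - apply (continuity_pt_comp (fun x => x - a) Rabs). apply continuity_pt_minus.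
      apply continuity_pt_id. apply continuity_pt_const; intros u v; reflexivity. apply Rcontinuity_abs.
    - apply (continuity_pt_comp (fun x => x - b) Rabs). apply continuity_pt_minus.
      apply continuity_pt_id. apply continuity_pt_const; intros u v; reflexivity. apply Rcontinuity_abs. }
  set (gt := fun x => g (cl x)).
  assert (Hgt : forall x, continuous gt x).
  { intros x. unfold gt. apply continuous_comp. apply Hclc. apply Hg. apply Hcl. }
  set (F := fun x => RInt gt a x).
  assert (HF : forall x, is_RInt gt a x (F x)).
  { intros x. unfold F. apply (RInt_correct gt a x). apply ex_RInt_continuous. intros; apply Hgt. }
  assert (HFd : forall x, is_derive F x (gt x)).
  { intros x. apply is_derive_RInt with a. apply filter_forall. intros; apply HF. apply Hgt. }
  destruct (MVT_gen (fun x => F x - G x) a b (fun _ => 0)) as [c [Hc Heq]].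
  - rewrite Rmin_left, Rmax_right by lra. intros x Hx.
    replace 0 with (gt x - g x).
    apply (is_derive_minus F G). apply HFd. apply Hd. lra.
    unfold gt. rewrite Hcl2; lra.
  - rewrite Rmin_left, Rmax_right by lra. intros x Hx.
    apply cont_to_pt. apply (continuous_minus F G).
    apply ex_derive_continuous. eexists. apply HFd. apply HG. lra.
  - assert (F a = 0). { unfold F. apply (RInt_point a gt). }
    apply is_RInt_ext with gt.
    { rewrite Rmin_left, Rmax_right by lra. intros x Hx. unfold gt. rewrite Hcl2; lra. }
    replace (G b - G a) with (F b) by lra. apply HF.
Qed.

Lemma exd_cont (f : R -> R) (x : R) : ex_derive f x -> continuous f x.
Proof. exact (@ex_derive_continuous R_AbsRing R_NormedModule f x). Qed.

Lemma RInt_scal_R (f : R -> R) a b c : ex_RInt f a b -> RInt (fun t => c * f t) a b = c * RInt f a b.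
Proof. intros H. exact (RInt_scal f a b c H). Qed.

Lemma RInt_comp_lin_R (f : R -> R) u v a b : ex_RInt f (u*a+v) (u*b+v) ->
  RInt (fun y => u * f (u*y+v)) a b = RInt f (u*a+v) (u*b+v).
Proof. intros H. exact (RInt_comp_lin f u v a b H). Qed.

Lemma exRc (f : R -> R) a b : (forall z, Rmin a b <= z <= Rmax a b -> continuous f z) -> ex_RInt f a b.
Proof. intros H. exact (ex_RInt_continuous f a b H). Qed.

Lemma RInt_correct_R (f : R -> R) a b : ex_RInt f a b -> is_RInt f a b (RInt f a b).
Proof. intros H. exact (RInt_correct f a b H). Qed.

Lemma exp_mono_le x y : x <= y -> exp x <= exp y.
Proof. intros H. destruct (Req_dec x y). subst; lra. apply Rlt_le, exp_increasing; lra. Qed.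

Section FL.
Context {T : Type} {F : (T -> Prop) -> Prop} {FF : Filter F}.

Lemma flim_plus (f g : T -> R) a b : filterlim f F (locally a) -> filterlim g F (locally b) ->
  filterlim (fun x => f x + g x) F (locally (a + b)).
Proof. intros H1 H2. exact (filterlim_comp_2 f g plus H1 H2 (filterlim_plus a b)). Qed.

Lemma flim_mult (f g : T -> R) a b : filterlim f F (locally a) -> filterlim g F (locally b) ->
  filterlim (fun x => f x * g x) F (locally (a * b)).
Proof. intros H1 H2. exact (filterlim_comp_2 f g mult H1 H2 (filterlim_mult a b)). Qed.

Lemma flim_opp (f : T -> R) a : filterlim f F (locally a) ->
  filterlim (fun x => - f x) F (locally (- a)).
Proof. intros H1. exact (filterlim_comp _ _ _ f opp F (locally a) (locally (opp a)) H1 (filterlim_opp a)). Qed.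

Lemma flim_const (a : R) : filterlim (fun _ : T => a) F (locally a).
Proof. apply filterlim_const. Qed.

Lemma flim_cont (f : T -> R) (g : R -> R) a : filterlim f F (locally a) -> continuous g a ->
  filterlim (fun x => g (f x)) F (locally (g a)).
Proof. intros H1 H2. exact (filterlim_comp _ _ _ f g F (locally a) (locally (g a)) H1 H2). Qed.

Lemma flim_ext_loc (f g : T -> R) a : F (fun x => f x = g x) -> filterlim f F (locally a) -> filterlim g F (locally a).
Proof. intros H1 H2. exact (filterlim_ext_loc f g H1 H2). Qed.

Lemma flim_eq (f : T -> R) a b : a = b -> filterlim f F (locally a) -> filterlim f F (locally b).
Proof. intros ->; auto. Qed.
End FL.

Lemma is_RInt_unique_R (f : R -> R) a b l : is_RInt f a b l -> RInt f a b = l.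
Proof. intros H. exact (is_RInt_unique f a b l H). Qed.

Lemma is_RInt_plus_R (f g : R -> R) a b lf lg : is_RInt f a b lf -> is_RInt g a b lg ->
  is_RInt (fun t => f t + g t) a b (lf + lg).
Proof. intros H1 H2. exact (is_RInt_plus f g a b lf lg H1 H2). Qed.

Lemma is_RInt_scal_R (f : R -> R) a b c l : is_RInt f a b l ->
  is_RInt (fun t => c * f t) a b (c * l).
Proof. intros H1. exact (is_RInt_scal f a b c l H1). Qed.

Lemma is_RInt_ext_R (f g : R -> R) a b l : (forall x, Rmin a b < x < Rmax a b -> f x = g x) ->
  is_RInt f a b l -> is_RInt g a b l.
Proof. intros H1 H2. exact (is_RInt_ext f g a b l H1 H2). Qed.

Ltac toR := match goal with |- ?a = ?b => change (@eq R a b) end.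

Lemma flim_scal_const {T} {F : (T -> Prop) -> Prop} {FF : Filter F} (f : T -> R) c a :
  filterlim f F (locally a) -> filterlim (fun x => c * f x) F (locally (c * a)).
Proof. intros H. apply flim_mult; auto. apply flim_const. Qed.


Lemma FTC_all (G g : R -> R) :
  (forall x, continuous G x) ->
  (forall x, x <> 0 -> is_derive G x (g x)) ->
  (forall x, continuous g x) ->
  forall a b, is_RInt g a b (G b - G a).
Proof.
  intros HG Hd Hg.
  assert (K : forall a b, a <= b -> is_RInt g a b (G b - G a)).
  { intros a b Hab.
    destruct (Rle_dec b 0) as [Hb|Hb].
    - apply FTC_open; auto. intros x Hx; apply Hd; lra.
    - destruct (Rle_dec 0 a) as [Ha|Ha].
      + apply FTC_open; auto. intros x Hx; apply Hd; lra.
      + replace (G b - G a) with (plus (G 0 - G a) (G b - G 0)) by (unfold plus; simpl; ring).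
        apply (is_RInt_Chasles g a 0 b).
        * apply FTC_open; auto; try lra. intros x Hx; apply Hd; lra.
        * apply FTC_open; auto; try lra. intros x Hx; apply Hd; lra. }
  intros a b. destruct (Rle_dec a b) as [H|H]. apply K; auto.
  replace (G b - G a) with (opp (G a - G b)) by (unfold opp; simpl; ring).
  apply (is_RInt_swap g a b). apply K; lra.
Qed.

Lemma lim_over_x (h : R -> R) (C : R) :
  (forall x, 1 <= x -> Rabs (h x) <= C / x) ->
  filterlim h (Rbar_locally p_infty) (locally 0).
Proof.
  intros H. apply filterlim_locally. intros eps.
  exists (Rmax 1 (Rabs C / eps)). intros x Hx.
  apply ball_R. rewrite Rminus_0_r.
  assert (H1 : 1 < x) by (eapply Rle_lt_trans; [apply Rmax_l|exact Hx]).
  assert (H2 : Rabs C / eps < x) by (eapply Rle_lt_trans; [apply Rmax_r|exact Hx]).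
  eapply Rle_lt_trans. apply H; lra.
  destruct eps as [e He]; simpl in *.
  apply Rmult_lt_reg_r with x. lra. unfold Rdiv. rewrite Rmult_assoc, Rinv_l by lra.
  apply Rmult_lt_compat_r with (r := e) in H2; [|lra].
  unfold Rdiv in H2. rewrite Rmult_assoc, Rinv_l in H2 by lra.
  assert (C <= Rabs C) by apply Rle_abs. lra.
Qed.

Lemma sum_ge_last (f : nat -> R) n : (forall k, 0 <= f k) -> f n <= sum_f_R0 f n.
Proof.
  intros Hf. destruct n. simpl; lra. simpl.
  assert (0 <= sum_f_R0 f n) by (apply cond_pos_sum; auto). lra.
Qed.

Lemma exp_ge_pow x k : 0 <= x -> x ^ k / INR (fact k) <= exp x.
Proof.
  intros Hx. eapply Rle_trans; [|apply exp_ge_taylor; exact Hx].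
  apply (sum_ge_last (fun k => x ^ k / INR (fact k))).
  intros j. apply Rmult_le_pos. apply pow_le; auto.
  apply Rlt_le, Rinv_0_lt_compat, INR_fact_lt_0.
Qed.

Lemma decay1 k : filterlim (fun x => x ^ k * exp (- x)) (Rbar_locally p_infty) (locally 0).
Proof.
  apply lim_over_x with (C := INR (fact (S k))). intros x Hx.
  assert (E := exp_ge_pow x (S k) ltac:(lra)).
  assert (F := INR_fact_lt_0 (S k)).
  assert (Hp : 0 < exp x) by apply exp_pos.
  rewrite exp_Ropp. rewrite Rabs_right.
  2:{ apply Rle_ge, Rmult_le_pos. apply pow_le; lra. apply Rlt_le, Rinv_0_lt_compat; auto. }
  simpl in E. unfold Rdiv in *.
  apply Rmult_le_reg_r with (x * exp x). nra.
  replace (x ^ k * / exp x * (x * exp x)) with (x * x ^ k) by (field; lra).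
  replace (INR (fact (S k)) * / x * (x * exp x)) with (INR (fact (S k)) * exp x) by (field; lra).
  apply Rmult_le_reg_r with (/ INR (fact (S k))). apply Rinv_0_lt_compat; auto.
  replace (INR (fact (S k)) * exp x * / INR (fact (S k))) with (exp x) by (field; lra). exact E.
Qed.

Lemma decay2 k : filterlim (fun x => x ^ (2 * k + 1) * exp (- (x ^ 2))) (Rbar_locally p_infty) (locally 0).
Proof.
  apply lim_over_x with (C := INR (fact (S k))). intros x Hx.
  assert (E := exp_ge_pow (x ^ 2) (S k) ltac:(nra)).
  assert (F := INR_fact_lt_0 (S k)).
  assert (Hp : 0 < exp (x ^ 2)) by apply exp_pos.
  rewrite exp_Ropp. rewrite Rabs_right.
  2:{ apply Rle_ge, Rmult_le_pos. apply pow_le; lra. apply Rlt_le, Rinv_0_lt_compat; auto. }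
  rewrite <- pow_mult in E. replace (2 * S k)%nat with (S (2 * k + 1)) in E by lia.
  simpl pow in E at 1. unfold Rdiv in *.
  apply Rmult_le_reg_r with (x * exp (x^2)). nra.
  replace (x ^ (2*k+1) * / exp (x^2) * (x * exp (x^2))) with (x * x ^ (2*k+1)) by (field; lra).
  replace (INR (fact (S k)) * / x * (x * exp (x^2))) with (INR (fact (S k)) * exp (x^2)) by (field; lra).
  apply Rmult_le_reg_r with (/ INR (fact (S k))). apply Rinv_0_lt_compat; auto.
  replace (INR (fact (S k)) * exp (x^2) * / INR (fact (S k))) with (exp (x^2)) by (field; lra). exact E.
Qed.

Definition gau (u : R) := exp (- (u ^ 2)).
Definition Eg (x : R) := RInt gau 0 x.
Definition fH (u t : R) := exp (- (u ^ 2) * (1 + t ^ 2)) / (1 + t ^ 2).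
Definition Hf (x : R) := RInt (fun t => fH x t) 0 1.

Lemma gau_cont x : continuous gau x.
Proof. apply exd_cont. unfold gau. auto_derive. auto. Qed.

Lemma Eg_correct a : is_RInt gau 0 a (Eg a).
Proof. unfold Eg. apply (RInt_correct gau 0 a). apply exRc. intros; apply gau_cont. Qed.

Lemma Eg_derive (x : R) : is_derive Eg x (gau x).
Proof. apply is_derive_RInt with 0. apply filter_forall. intros; apply Eg_correct. apply gau_cont. Qed.

Lemma pos1t t : 0 < 1 + t ^ 2.
Proof. nra. Qed.

Lemma fH_derive (u t : R) : is_derive (fun z => fH z t) u (-2 * u * exp (- (u ^ 2) * (1 + t ^ 2))).
Proof.
  unfold fH. assert (H := pos1t t).
  auto_derive. lra. replace (t*(t*1)) with (t^2) by ring. replace (u*(u*1)) with (u^2) by ring. field. lra.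
Qed.

Lemma fH_Derive u t : Derive (fun z => fH z t) u = -2 * u * exp (- (u ^ 2) * (1 + t ^ 2)).
Proof. apply is_derive_unique, fH_derive. Qed.

Lemma cont2_exp (h : R -> R -> R) x y : continuity_2d_pt h x y ->
  continuity_2d_pt (fun u v => exp (h u v)) x y.
Proof.
  intros H. apply continuity_2d_pt_filterlim.
  apply continuity_2d_pt_filterlim in H.
  eapply filterlim_comp. exact H. apply continuous_exp.
Qed.

Lemma cont2_dfH x t : continuity_2d_pt (fun u v => Derive (fun z => fH z v) u) x t.
Proof.
  apply continuity_2d_pt_ext with (fun u v => -2 * u * exp (- (u ^ 2) * (1 + v ^ 2))).
  { intros; rewrite fH_Derive; auto. }
  apply continuity_2d_pt_mult. apply continuity_2d_pt_mult.
  apply continuity_2d_pt_const. apply continuity_2d_pt_id1.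
  apply cont2_exp. apply continuity_2d_pt_mult.
  apply continuity_2d_pt_opp. simpl.
  apply continuity_2d_pt_mult. apply continuity_2d_pt_id1.
  apply continuity_2d_pt_mult. apply continuity_2d_pt_id1. apply continuity_2d_pt_const.
  apply continuity_2d_pt_plus. apply continuity_2d_pt_const. simpl.
  apply continuity_2d_pt_mult. apply continuity_2d_pt_id2.
  apply continuity_2d_pt_mult. apply continuity_2d_pt_id2. apply continuity_2d_pt_const.
Qed.

Lemma fH_cont x t : continuous (fun t => fH x t) t.
Proof. apply exd_cont. unfold fH. assert (H := pos1t t). auto_derive. lra. Qed.

Lemma Hf_derive (x : R) : is_derive Hf x (-2 * exp (- (x ^ 2)) * Eg x).
Proof.
  assert (V : RInt (fun t => Derive (fun u => fH u t) x) 0 1 = -2 * exp (- (x ^ 2)) * Eg x).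
  { rewrite (RInt_ext _ (fun t => (-2 * exp (- (x ^ 2))) * (x * (gau (x * t + 0))))).
    2:{ intros t _. rewrite fH_Derive. unfold gau; simpl.
        replace (- (x * (x * 1)) * (1 + t * (t * 1))) with (- (x * (x * 1)) + - ((x * t + 0) * ((x * t + 0) * 1))) by ring.
        rewrite exp_plus. ring. }
    rewrite (RInt_scal_R (fun t => x * (gau (x*t+0))) 0 1 (-2*exp(-(x^2)))).
    2:{ apply exRc. intros z _. apply exd_cont. unfold gau. auto_derive. auto. }
    rewrite (RInt_comp_lin_R gau x 0 0 1).
    2:{ apply exRc. intros; apply gau_cont. }
    replace (x * 0 + 0) with 0 by ring. replace (x * 1 + 0) with x by ring.
    reflexivity. }
  rewrite <- V. unfold Hf.
  apply (is_derive_RInt_param fH 0 1 x).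
  - apply filter_forall. intros y t _. eexists. apply fH_derive.
  - intros; apply cont2_dfH.
  - apply filter_forall. intros y. apply exRc. intros; apply fH_cont.
Qed.

Definition Kg (x : R) := Eg x ^ 2 + Hf x.

Lemma Kg_derive (x : R) : is_derive Kg x 0.
Proof.
  unfold Kg. replace 0 with (INR 2 * gau x * Eg x ^ Init.Nat.pred 2 + (-2 * exp (- (x ^ 2)) * Eg x)).
  2:{ unfold gau. simpl. ring. }
  apply (is_derive_plus (fun x => Eg x ^ 2) Hf).
  - apply (is_derive_pow Eg 2 x (gau x)). apply Eg_derive.
  - apply Hf_derive.
Qed.

Lemma Kg_const x : Kg x = Kg 0.
Proof.
  destruct (MVT_gen Kg 0 x (fun _ => 0)) as [c [_ Hc]].
  - intros; apply Kg_derive.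
  - intros. apply cont_to_pt. apply exd_cont. eexists; apply Kg_derive.
  - lra.
Qed.

Lemma Kg0 : Kg 0 = PI / 4.
Proof.
  unfold Kg, Eg, Hf.
  rewrite RInt_point. unfold zero; simpl.
  rewrite (RInt_ext _ (fun t => / (1 + t²))).
  2:{ intros t _. unfold fH. replace (- (0 ^ 2) * (1 + t ^ 2)) with 0 by ring. rewrite exp_0.
      unfold Rsqr. simpl. field. nra. }
  assert (H : is_RInt (fun t => / (1 + t²)) 0 1 (atan 1 - atan 0)).
  { apply (is_RInt_derive (V:=R_CompleteNormedModule) atan (fun t => / (1 + t²))).
    - intros; apply is_derive_atan.
    - intros x _. apply exd_cont. auto_derive. unfold Rsqr; nra. }
  rewrite (is_RInt_unique _ _ _ _ H). rewrite atan_1, atan_0. ring.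
Qed.

Lemma Hf_bound x : 0 <= Hf x <= exp (- (x ^ 2)).
Proof.
  unfold Hf. assert (Ex : ex_RInt (fun t => fH x t) 0 1) by (apply exRc; intros; apply fH_cont).
  split.
  - apply RInt_ge_0. lra. exact Ex. intros t _. unfold fH.
    apply Rmult_le_pos. apply Rlt_le, exp_pos. apply Rlt_le, Rinv_0_lt_compat, pos1t.
  - eapply Rle_trans. apply (RInt_le _ (fun _ => exp (- (x ^ 2)))). lra. exact Ex.
    apply exRc; intros; apply continuous_const.
    intros t Ht. unfold fH. assert (P := pos1t t).
    assert (exp (- x ^ 2 * (1 + t ^ 2)) <= exp (- x ^ 2)).
    { apply exp_mono_le. ring_simplify. assert (0 <= x^2 * t^2) by (apply Rmult_le_pos; apply pow2_ge_0). nra. }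
    unfold Rdiv. apply Rmult_le_reg_r with (1 + t^2). lra.
    rewrite Rmult_assoc, Rinv_l by lra.
    assert (0 < exp (- x ^ 2)) by apply exp_pos. nra.
    rewrite RInt_const. unfold scal; simpl; unfold mult; simpl. lra.
Qed.

Lemma exp_negsq_le x : 1 <= x -> exp (- (x ^ 2)) <= 1 / x.
Proof.
  intros Hx. rewrite exp_Ropp. assert (H := exp_ineq1_le (x ^ 2)).
  assert (0 < exp (x^2)) by apply exp_pos.
  unfold Rdiv. rewrite Rmult_1_l. apply Rinv_le_contravar. lra. nra.
Qed.

Lemma Hf_lim : filterlim Hf (Rbar_locally p_infty) (locally 0).
Proof.
  apply lim_over_x with 1. intros x Hx. destruct (Hf_bound x).
  rewrite Rabs_right by lra. eapply Rle_trans. eauto. apply exp_negsq_le; auto.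
Qed.

Lemma Eg_nonneg x : 0 <= x -> 0 <= Eg x.
Proof.
  intros Hx. unfold Eg. apply RInt_ge_0; auto. apply exRc; intros; apply gau_cont.
  intros; unfold gau; apply Rlt_le, exp_pos.
Qed.

Lemma Eg_sqrt x : 0 <= x -> Eg x = sqrt (PI / 4 - Hf x).
Proof.
  intros Hx. assert (K := Kg_const x). rewrite Kg0 in K. unfold Kg in K.
  replace (PI / 4 - Hf x) with (Eg x ^ 2) by lra. rewrite sqrt_pow2; auto. apply Eg_nonneg; auto.
Qed.

Lemma Eg_lim : filterlim Eg (Rbar_locally p_infty) (locally (sqrt PI / 2)).
Proof.
  apply flim_ext_loc with (fun x => sqrt (PI / 4 - Hf x)).
  { exists 0. intros x Hx. symmetry. apply Eg_sqrt. lra. }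
  apply flim_eq with (sqrt (PI / 4 + - 0)).
  { replace (PI / 4 + - 0) with (PI / 4) by ring. rewrite sqrt_div_alt by lra.
    replace 4 with (2 ^ 2) by ring. rewrite sqrt_pow2 by lra. reflexivity. }
  apply flim_cont. 2: apply continuous_sqrt.
  apply flim_plus. apply flim_const. apply flim_opp. apply Hf_lim.
Qed.

Definition Gk (k : nat) (x : R) := RInt (fun u => u ^ (2 * k) * exp (- (u ^ 2))) 0 x.

Fixpoint Lk (k : nat) : R :=
  match k with O => sqrt PI / 2 | S j => (2 * INR j + 1) / 2 * Lk j end.

Lemma Gk_cont k x : continuous (fun u => u ^ (2 * k) * exp (- (u ^ 2))) x.
Proof. apply exd_cont. auto_derive. auto. Qed.

Lemma Gk_correct k x : is_RInt (fun u => u ^ (2 * k) * exp (- (u ^ 2))) 0 x (Gk k x).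
Proof. unfold Gk. apply RInt_correct_R. apply exRc. intros; apply Gk_cont. Qed.

Lemma Gk_rec k x : Gk (S k) x = (2 * INR k + 1) / 2 * Gk k x - x ^ (2 * k + 1) * exp (- (x ^ 2)) / 2.
Proof.
  set (D := fun u => - (u ^ S (2 * k) * exp (- (u ^ 2))) / 2).
  set (dg := fun u => u ^ (2 * k) * u ^ 2 * exp (- (u ^ 2)) - (2 * INR k + 1) / 2 * (u ^ (2 * k) * exp (- (u ^ 2)))).
  assert (HD : is_RInt dg 0 x (D x - D 0)).
  { apply FTC_all.
    - intros u. apply exd_cont. unfold D. auto_derive. auto.
    - intros u _. unfold D, dg. auto_derive. auto.
      change (match (k + (k + 0))%nat with 0%nat => 1 | S _ => INR (k + (k + 0)) + 1 end) with (INR (S (k + (k + 0)))).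
      replace (k + (k + 0))%nat with (2 * k)%nat by lia. rewrite S_INR, mult_INR.
      replace (u * (u * 1)) with (u ^ 2) by ring. simpl INR. field.
    - intros v. apply exd_cont. unfold dg. auto_derive. auto. }
  assert (HS := is_RInt_scal_R _ _ _ ((2 * INR k + 1) / 2) _ (Gk_correct k x)).
  assert (HP := is_RInt_plus_R _ _ _ _ _ _ HD HS).
  apply is_RInt_unique_R in HP.
  unfold Gk at 1. rewrite <- (RInt_ext (fun u => dg u + (2 * INR k + 1) / 2 * (u ^ (2 * k) * exp (- u ^ 2)))).
  2:{ intros u _. unfold dg.
      match goal with |- ?a = ?b => change (@eq R a b) end.
      replace (2 * S k)%nat with (2 * k + 2)%nat by lia. rewrite pow_add. ring. }
  rewrite HP. unfold D.
  match goal with |- ?a = ?b => change (@eq R a b) end.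
  replace (2 * k + 1)%nat with (S (2 * k)) by lia. simpl.
  match goal with |- ?a = ?b => change (@eq R a b) end. field.
Qed.

Lemma Gk_lim k : filterlim (Gk k) (Rbar_locally p_infty) (locally (Lk k)).
Proof.
  induction k.
  - apply flim_ext_loc with Eg. 2: apply Eg_lim.
    apply filter_forall. intros x. unfold Eg, Gk. apply RInt_ext. intros; unfold gau; simpl; ring.
  - apply flim_ext_loc with (fun x => (2 * INR k + 1) / 2 * Gk k x + - (/2 * (x ^ (2 * k + 1) * exp (- (x ^ 2))))).
    { apply filter_forall. intros x. rewrite Gk_rec. field. }
    simpl Lk. apply flim_eq with ((2 * INR k + 1) / 2 * Lk k + - (/2 * 0)). toR; ring.
    apply flim_plus. apply flim_scal_const; auto. apply flim_opp. apply flim_scal_const. apply decay2.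
Qed.

Definition Mk (k : nat) (x : R) := RInt (fun t => t ^ k * exp (- t)) 0 x.

Lemma Mk_cont k x : continuous (fun t => t ^ k * exp (- t)) x.
Proof. apply exd_cont. auto_derive. auto. Qed.

Lemma Mk_correct k x : is_RInt (fun t => t ^ k * exp (- t)) 0 x (Mk k x).
Proof. unfold Mk. apply RInt_correct_R. apply exRc. intros; apply Mk_cont. Qed.

Lemma Mk0 x : Mk 0 x = 1 - exp (- x).
Proof.
  apply is_RInt_unique_R.
  replace (1 - exp (- x)) with ((- exp (- x)) - (- exp (- 0))) by (rewrite Ropp_0, exp_0; ring).
  apply (FTC_all (fun t => - exp (- t))).
  - intros u. apply exd_cont. auto_derive. auto.
  - intros u _. auto_derive. auto. simpl. ring.
  - intros; apply Mk_cont.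
Qed.

Lemma Mk_rec k x : Mk (S k) x = INR (S k) * Mk k x - x ^ (S k) * exp (- x).
Proof.
  set (D := fun u => - (u ^ S k * exp (- u))).
  set (dg := fun u => u ^ (S k) * exp (- u) - INR (S k) * (u ^ k * exp (- u))).
  assert (HD : is_RInt dg 0 x (D x - D 0)).
  { apply FTC_all.
    - intros u. apply exd_cont. unfold D. auto_derive. auto.
    - intros u _. unfold D, dg. auto_derive. auto.
      change (match k with 0%nat => 1 | S _ => INR k + 1 end) with (INR (S k)).
      match goal with |- ?a = ?b => change (@eq R a b) end. simpl pow. ring.
    - intros v. apply exd_cont. unfold dg. auto_derive. auto. }
  assert (HS := is_RInt_scal_R _ _ _ (INR (S k)) _ (Mk_correct k x)).
  assert (HP := is_RInt_plus_R _ _ _ _ _ _ HD HS).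
  apply is_RInt_unique_R in HP.
  unfold Mk at 1. rewrite <- (RInt_ext (fun u => dg u + INR (S k) * (u ^ k * exp (- u)))).
  2:{ intros u _. unfold dg. match goal with |- ?a = ?b => change (@eq R a b) end. ring. }
  rewrite HP. unfold D. simpl.
  match goal with |- ?a = ?b => change (@eq R a b) end. ring.
Qed.

Lemma Mk_lim k : filterlim (Mk k) (Rbar_locally p_infty) (locally (INR (fact k))).
Proof.
  induction k.
  - apply flim_ext_loc with (fun x => 1 + - (x ^ 0 * exp (- x))).
    { apply filter_forall. intros x. rewrite Mk0. simpl. ring. }
    apply flim_eq with (1 + - 0). simpl; toR; ring.
    apply flim_plus. apply flim_const. apply flim_opp. apply decay1.
  - apply flim_ext_loc with (fun x => INR (S k) * Mk k x + - (x ^ (S k) * exp (- x))).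
    { apply filter_forall. intros x. rewrite Mk_rec. ring. }
    apply flim_eq with (INR (S k) * INR (fact k) + - 0).
    { rewrite fact_simpl, mult_INR. toR; ring. }
    apply flim_plus. apply flim_scal_const; auto. apply flim_opp. apply decay1.
Qed.

Lemma FTC_pos (H h : R -> R) :
  (forall x, 0 < x -> continuous H x) ->
  (forall x, 0 < x -> is_derive H x (h x)) ->
  (forall x, 0 < x -> continuous h x) ->
  forall a b, 0 < a -> 0 < b -> is_RInt h a b (H b - H a).
Proof.
  intros HH Hd Hh a b Ha Hb.
  destruct (Rle_dec a b).
  - apply FTC_open; auto; intros; [apply HH|apply Hd|apply Hh]; lra.
  - replace (H b - H a) with (opp (H a - H b)) by (unfold opp; simpl; ring).
    apply (is_RInt_swap h a b). apply FTC_open; try lra; intros; [apply HH|apply Hd|apply Hh]; lra.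
Qed.

Lemma gen_right0_pinf (f H : R -> R) l0 l :
  (forall a b, 0 < a -> 0 < b -> is_RInt f a b (H b - H a)) ->
  filterlim H (at_right 0) (locally l0) ->
  filterlim H (Rbar_locally p_infty) (locally l) ->
  is_RInt_gen f (at_right 0) (Rbar_locally p_infty) (l - l0).
Proof.
  intros HI H0 Hl. apply (is_RInt_gen_antider f H); auto.
  apply Filter_prod with (fun a => 0 < a) (fun b => 0 < b).
  - unfold at_right, within. apply filter_forall. auto.
  - exists 0. intros; auto.
  - intros a b Ha Hb. apply HI; auto.
Qed.

Lemma cont_right0 (H : R -> R) : continuous H 0 -> filterlim H (at_right 0) (locally (H 0)).
Proof. intros C. eapply filterlim_filter_le_1. apply filter_le_within. exact C. Qed.

Lemma Mk_deriv m (x : R) : is_derive (Mk m) x (x ^ m * exp (- x)).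
Proof.
  apply (is_derive_RInt (fun t => t ^ m * exp (- t)) (Mk m) 0).
  apply filter_forall. intros; apply Mk_correct. apply Mk_cont.
Qed.

Lemma Gamma_nat m : Gamma (INR (S m)) = INR (fact m).
Proof.
  unfold Gamma. apply is_RInt_gen_unique.
  replace (INR (fact m)) with (INR (fact m) - Mk m 0).
  2:{ unfold Mk. rewrite (RInt_point 0). unfold zero; simpl. ring. }
  apply (gen_right0_pinf _ (Mk m)).
  - intros a b Ha Hb. apply is_RInt_ext_R with (fun t => t ^ m * exp (- t)).
    + intros x Hx. assert (0 < x). { destruct (Rle_dec a b); [rewrite Rmin_left in Hx|rewrite Rmin_right in Hx]; lra. }
      rewrite S_INR. replace (INR m + 1 - 1) with (INR m) by ring. rewrite Rpower_pow; auto.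
    + apply (FTC_all (Mk m)).
      * intros. apply exd_cont. eexists. apply Mk_deriv.
      * intros x _. apply Mk_deriv.
      * intros; apply Mk_cont.
  - apply cont_right0. apply exd_cont. eexists. apply Mk_deriv.
  - apply Mk_lim.
Qed.

Lemma Gk_deriv k (u : R) : is_derive (Gk k) u (u ^ (2 * k) * exp (- (u ^ 2))).
Proof.
  apply (is_derive_RInt (fun t => t ^ (2 * k) * exp (- (t ^ 2))) (Gk k) 0).
  apply filter_forall. intros; apply Gk_correct. apply Gk_cont.
Qed.

Lemma Gamma_half m : Gamma (INR (S m) + / 2) = 2 * Lk (S m).
Proof.
  unfold Gamma. apply is_RInt_gen_unique.
  set (H := fun t => 2 * Gk (S m) (sqrt t)).
  replace (2 * Lk (S m)) with (2 * Lk (S m) - H 0).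
  2:{ unfold H, Gk. rewrite sqrt_0, (RInt_point 0). unfold zero; simpl. ring. }
  apply (gen_right0_pinf _ H).
  - intros a b Ha Hb. apply is_RInt_ext_R with (fun t => t ^ m * sqrt t * exp (- t)).
    + intros x Hx. assert (0 < x). { destruct (Rle_dec a b); [rewrite Rmin_left in Hx|rewrite Rmin_right in Hx]; lra. }
      rewrite S_INR. replace (INR m + 1 + / 2 - 1) with (INR m + / 2) by ring.
      rewrite Rpower_plus, Rpower_pow, Rpower_sqrt; auto.
    + apply FTC_pos.
      * intros x Hx. apply exd_cont. eexists. unfold H.
        apply is_derive_scal. apply (is_derive_comp (Gk (S m)) sqrt). apply Gk_deriv.
        apply (is_derive_sqrt (fun t => t) x 1); [auto_derive; auto | auto].
      * intros x Hx. unfold H.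
        evar (d : R).
        assert (D : is_derive (fun t => 2 * Gk (S m) (sqrt t)) x d).
        { apply is_derive_scal. apply (is_derive_comp (Gk (S m)) sqrt). apply Gk_deriv.
          apply (is_derive_sqrt (fun t => t) x 1); [auto_derive; auto | auto]. }
        replace (x ^ m * sqrt x * exp (- x)) with d. exact D.
        unfold d, scal; simpl; unfold mult; simpl.
        assert (Hs : 0 < sqrt x) by (apply sqrt_lt_R0; auto).
        assert (Hs2 : sqrt x * sqrt x = x) by (apply sqrt_sqrt; lra).
        replace (sqrt x * (sqrt x * 1)) with x by (rewrite Rmult_1_r; auto).
        replace (m + S (m + 0))%nat with (2*m+1)%nat by lia.
        rewrite pow_add, pow_mult, pow2_sqrt, pow_1 by lra. toR. field. lra.
      * intros x Hx. apply exd_cont. auto_derive. auto.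
      * auto.
      * auto.
  - apply flim_eq with (H 0); auto.
    unfold H. apply (flim_mult (fun _ => 2)). apply flim_const.
    apply (flim_cont sqrt (Gk (S m))).
    apply cont_right0. apply continuous_sqrt.
    apply exd_cont. eexists. apply Gk_deriv.
  - replace (2 * Lk (S m)) with (2 * Lk (S m)) by ring.
    unfold H. apply (flim_mult (fun _ => 2)). apply flim_const.
    eapply filterlim_comp. apply filterlim_sqrt_p. apply Gk_lim.
Qed.

Definition qf (v : R) := if Req_EM_T v 0 then 1 else (1 - exp (- v)) / v.

Lemma exp_neg_lt1 v : 0 < v -> exp (- v) < 1.
Proof. intros H. rewrite <- exp_0. apply exp_increasing. lra. Qed.

Lemma qf_pos v : 0 <= v -> 0 < qf v.
Proof.
  intros H. unfold qf. destruct (Req_EM_T v 0). lra.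
  assert (exp (- v) < 1) by (apply exp_neg_lt1; lra).
  apply Rdiv_lt_0_compat; lra.
Qed.

Lemma qf_cont0 : continuous qf 0.
Proof.
  assert (L := is_lim_div_expm1_0).
  apply filterlim_locally. intros eps.
  specialize (L (fun u => ball 1 eps u)). simpl in L.
  destruct (L (locally_ball 1 eps)) as [d Hd].
  exists d. intros v Hv. unfold qf. destruct (Req_EM_T v 0) as [E|E].
  - destruct (Req_EM_T 0 0); [|lra]. apply ball_center.
  - destruct (Req_EM_T 0 0); [|lra].
    assert (Hv' : ball 0 d (- v)).
    { apply ball_R. apply ball_R in Hv. replace (-v - 0) with (-(v-0)) by ring. rewrite Rabs_Ropp. exact Hv. }
    specialize (Hd (- v) Hv' ltac:(lra)).
    replace ((1 - exp (- v)) / v) with ((exp (- v) - 1) / (- v)) by (field; auto). exact Hd.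
Qed.

Lemma qf_cont v : 0 <= v -> continuous qf v.
Proof.
  intros Hv. destruct (Req_dec v 0) as [E|E]. subst; apply qf_cont0.
  apply continuous_ext_loc with (fun u => (1 - exp (- u)) / u).
  - assert (Hp : 0 < Rabs v) by (apply Rabs_pos_lt; auto).
    exists (mkposreal _ Hp). intros u Hu. apply ball_R in Hu. simpl in Hu.
    unfold qf. destruct (Req_EM_T u 0); auto.
    subst. exfalso. change (Rabs (0 - v) < Rabs v) in Hu. rewrite Rminus_0_l, Rabs_Ropp in Hu. lra.
  - apply exd_cont. auto_derive. auto.
Qed.

Lemma phi_alt z : phi z = sqrt (/ qf (/2 * z ^ 2)).
Proof.
  unfold phi, qf. destruct (Req_EM_T z 0) as [E|E].
  - subst. destruct (Req_EM_T (/2 * 0 ^ 2) 0) as [_|F]. rewrite Rinv_1, sqrt_1. auto.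
    exfalso; apply F; ring.
  - destruct (Req_EM_T (/2 * z ^ 2) 0) as [F|_].
    + exfalso. assert (0 < z ^ 2) by (apply pow2_gt_0; auto). lra.
    + f_equal. assert (0 < /2 * z^2). { assert (0 < z^2) by (apply pow2_gt_0; auto). lra. }
      assert (exp (- (/2 * z^2)) < 1) by (apply exp_neg_lt1; lra).
      field. split; lra.
Qed.

Lemma phi_cont z : continuous phi z.
Proof.
  apply continuous_ext with (fun z => sqrt (/ qf (/2 * z ^ 2))).
  { intros; symmetry; apply phi_alt. }
  apply continuous_sqrt_comp.
  assert (Hv : 0 <= /2 * z ^ 2) by (assert (0 <= z^2) by apply pow2_ge_0; lra).
  apply (continuous_comp (fun z => qf (/2 * z ^ 2)) Rinv).
  - apply (continuous_comp (fun z => /2 * z ^ 2) qf).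
    + apply exd_cont. auto_derive. auto.
    + apply qf_cont; auto.
  - apply continuity_pt_filterlim. apply continuity_pt_inv. apply continuity_pt_id.
    assert (0 < qf (/2 * z ^ 2)) by (apply qf_pos; auto). lra.
Qed.

Definition sf (z : R) := sqrt (1 - exp (- (/2 * z ^ 2))).
Definition tf (z : R) := if Rlt_dec z 0 then (1 - sf z) / 2 else (1 + sf z) / 2.

Lemma arg_nonneg z : 0 <= /2 * z ^ 2.
Proof. assert (0 <= z^2) by apply pow2_ge_0; lra. Qed.

Lemma one_m_e_nonneg z : 0 <= 1 - exp (- (/2 * z ^ 2)).
Proof.
  assert (H := arg_nonneg z). destruct (Req_dec (/2 * z^2) 0) as [E|E].
  rewrite E, Ropp_0, exp_0. lra. assert (exp (- (/2 * z^2)) < 1) by (apply exp_neg_lt1; lra). lra.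
Qed.

Lemma one_m_e_pos z : z <> 0 -> 0 < 1 - exp (- (/2 * z ^ 2)).
Proof.
  intros Hz. assert (0 < z^2) by (apply pow2_gt_0; auto).
  assert (exp (- (/2 * z^2)) < 1) by (apply exp_neg_lt1; lra). lra.
Qed.

Lemma sf_sq z : sf z * sf z = 1 - exp (- (/2 * z ^ 2)).
Proof. unfold sf. apply sqrt_sqrt. apply one_m_e_nonneg. Qed.

Lemma sf_pos z : z <> 0 -> 0 < sf z.
Proof. intros Hz. unfold sf. apply sqrt_lt_R0. apply one_m_e_pos; auto. Qed.

Lemma phi_sf z : z <> 0 -> sqrt 2 * phi z = Rabs z / sf z.
Proof.
  intros Hz. unfold phi. destruct (Req_EM_T z 0) as [E|_]; [contradiction|].
  assert (Hb := one_m_e_pos z Hz).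
  rewrite <- sqrt_mult_alt by lra.
  replace (2 * (/ 2 * z ^ 2 / (1 - exp (- (/ 2 * z ^ 2))))) with (z ^ 2 / (1 - exp (- (/ 2 * z ^ 2)))) by (field; lra).
  rewrite sqrt_div_alt by lra.
  assert (E : sqrt (z ^ 2) = Rabs z) by (rewrite <- Rsqr_pow2; apply sqrt_Rsqr_abs). rewrite E. reflexivity.
Qed.

Lemma tf_prod z : tf z * (1 - tf z) = exp (- (/2 * z ^ 2)) / 4.
Proof.
  assert (H := sf_sq z). unfold tf. destruct (Rlt_dec z 0); nra.
Qed.

Lemma tf_derive z : z <> 0 -> is_derive tf z (sqrt 2 * phi z * exp (- (/2 * z ^ 2)) / 4).
Proof.
  intros Hz. rewrite phi_sf by auto. assert (Hs := sf_pos z Hz). assert (Hb := one_m_e_pos z Hz).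
  destruct (Rlt_dec z 0) as [Hn|Hp].
  - apply is_derive_ext_loc with (fun t => (1 - sf t) / 2).
    { assert (Hd : 0 < - z) by lra. exists (mkposreal _ Hd). intros t Ht.
      change (Rabs (t - z) < - z) in Ht. unfold tf. destruct (Rlt_dec t 0); auto.
      exfalso. apply Rabs_lt_between in Ht. lra. }
    rewrite Rabs_left by auto. unfold sf in *. auto_derive. auto.
    replace (z * (z * 1)) with (z ^ 2) by ring.
    replace (1 + - exp (- (/2 * z^2))) with (1 - exp (- (/2*z^2))) by ring.
    set (e := exp (- (/ 2 * z ^ 2))) in *. set (s := sqrt (1 - e)) in *.
    toR. field. lra.
  - apply is_derive_ext_loc with (fun t => (1 + sf t) / 2).
    { assert (Hd : 0 < z) by lra. exists (mkposreal _ Hd). intros t Ht.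
      change (Rabs (t - z) < z) in Ht. unfold tf. destruct (Rlt_dec t 0); auto.
      exfalso. apply Rabs_lt_between in Ht. lra. }
    rewrite Rabs_right by lra. unfold sf in *. auto_derive. auto.
    replace (z * (z * 1)) with (z ^ 2) by ring.
    replace (1 + - exp (- (/2 * z^2))) with (1 - exp (- (/2*z^2))) by ring.
    set (e := exp (- (/ 2 * z ^ 2))) in *. set (s := sqrt (1 - e)) in *.
    toR. field. lra.
Qed.

Lemma sf_cont z : continuous sf z.
Proof. unfold sf. apply continuous_sqrt_comp. apply exd_cont. auto_derive. auto. Qed.

Lemma tf_cont z : continuous tf z.
Proof.
  destruct (Req_dec z 0) as [E|E].
  2:{ apply exd_cont. eexists. apply tf_derive; auto. }
  subst. assert (S0 : sf 0 = 0).
  { unfold sf. replace (1 - exp (- (/2 * 0 ^ 2))) with 0. apply sqrt_0.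
    replace (- (/2 * 0 ^ 2)) with 0 by ring. rewrite exp_0. ring. }
  assert (T0 : tf 0 = / 2). { unfold tf. destruct (Rlt_dec 0 0). lra. rewrite S0. field. }
  apply filterlim_locally. intros eps.
  assert (C := proj1 (filterlim_locally sf (sf 0)) (sf_cont 0) eps).
  eapply filter_imp; [|exact C]. intros t Ht. simpl in Ht.
  change (Rabs (sf t - sf 0) < eps) in Ht. change (Rabs (tf t - tf 0) < eps).
  rewrite T0. rewrite S0, Rminus_0_r in Ht.
  assert (0 <= sf t) by (unfold sf; apply sqrt_pos).
  rewrite Rabs_right in Ht by lra.
  unfold tf. destruct (Rlt_dec t 0).
  - replace ((1 - sf t) / 2 - / 2) with (- (sf t / 2)) by field. rewrite Rabs_Ropp, Rabs_right; lra.
  - replace ((1 + sf t) / 2 - / 2) with (sf t / 2) by field. rewrite Rabs_right; lra.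
Qed.

Definition pw (m : nat) (t : R) := (t * (1 - t)) ^ m.
Definition Pm (m : nat) (x : R) := RInt (pw m) 0 x.

Lemma pw_cont m t : continuous (pw m) t.
Proof. apply exd_cont. unfold pw. auto_derive. auto. Qed.

Lemma Pm_correct m x : is_RInt (pw m) 0 x (Pm m x).
Proof. unfold Pm. apply RInt_correct_R. apply exRc. intros; apply pw_cont. Qed.

Lemma Pm_deriv m (x : R) : is_derive (Pm m) x (pw m x).
Proof.
  apply (is_derive_RInt (pw m) (Pm m) 0).
  apply filter_forall. intros; apply Pm_correct. apply pw_cont.
Qed.

Lemma Pm_cont m x : continuous (Pm m) x.
Proof. apply exd_cont. eexists. apply Pm_deriv. Qed.

Lemma Pm0 m : Pm m 0 = 0.
Proof. unfold Pm. rewrite (RInt_point 0). reflexivity. Qed.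

Lemma exp_pow_nat x n : exp x ^ n = exp (INR n * x).
Proof.
  induction n. simpl. rewrite Rmult_0_l, exp_0; auto.
  rewrite S_INR. simpl pow. rewrite IHn. rewrite <- exp_plus. f_equal. ring.
Qed.

Definition Gz (m : nat) (z : R) := 4 ^ (S m) / sqrt 2 * Pm m (tf z).
Definition gz (N : nat) (z : R) := exp (- (/2 * INR N * z ^ 2)) * phi z.

Lemma Gz_derive m z : z <> 0 -> is_derive (Gz m) z (gz (S m) z).
Proof.
  intros Hz. unfold Gz.
  evar (d : R).
  assert (D : is_derive (fun z => 4 ^ (S m) / sqrt 2 * Pm m (tf z)) z d).
  { apply is_derive_scal. apply (is_derive_comp (Pm m) tf). apply Pm_deriv. apply tf_derive; auto. }
  replace (gz (S m) z) with d. exact D.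
  unfold d, scal; simpl; unfold mult; simpl.
  unfold pw. rewrite tf_prod. unfold gz.
  replace (- (/ 2 * INR (S m) * z ^ 2)) with (INR (S m) * (- (/2 * z ^ 2))) by ring.
  rewrite <- exp_pow_nat. simpl pow at 3.
  assert (Hs : 0 < sqrt 2) by (apply sqrt_lt_R0; lra).
  replace (z * (z * 1)) with (z ^ 2) by ring.
  set (e := exp (- (/ 2 * z ^ 2))).
  unfold Rdiv. rewrite Rpow_mult_distr, pow_inv.
  assert (0 < 4 ^ m) by (apply pow_lt; lra).
  simpl pow. toR. field. lra.
Qed.

Lemma Gz_cont m z : continuous (Gz m) z.
Proof.
  unfold Gz. apply (continuous_scal_r (4 ^ (S m) / sqrt 2) (fun z => Pm m (tf z))).
  apply (continuous_comp tf (Pm m)). apply tf_cont. apply Pm_cont.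
Qed.

Lemma gz_cont N z : continuous (gz N) z.
Proof.
  unfold gz. apply (continuous_mult (fun z => exp (- (/2 * INR N * z ^ 2))) phi).
  apply exd_cont. auto_derive. auto. apply phi_cont.
Qed.

Lemma Gz_RInt m a b : is_RInt (gz (S m)) a b (Gz m b - Gz m a).
Proof.
  apply (FTC_all (Gz m)). apply Gz_cont. intros; apply Gz_derive; auto. apply gz_cont.
Qed.

Lemma e_lim_m : filterlim (fun z => exp (- (/2 * z ^ 2))) (Rbar_locally m_infty) (locally 0).
Proof.
  apply filterlim_locally. intros [eps He]. simpl.
  exists (Rmin (-2) (- / eps)). intros z Hz.
  assert (H1 : z < -2) by (eapply Rlt_le_trans; [exact Hz|apply Rmin_l]).
  assert (H2 : z < - / eps) by (eapply Rlt_le_trans; [exact Hz|apply Rmin_r]).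
  change (Rabs (exp (- (/ 2 * z ^ 2)) - 0) < eps).
  rewrite Rminus_0_r, Rabs_right by (apply Rle_ge, Rlt_le, exp_pos).
  rewrite exp_Ropp. assert (E := exp_ineq1_le (/2 * z ^ 2)).
  assert (Hv : - z <= / 2 * z ^ 2) by nra.
  assert (Hi : / eps < - z) by lra.
  assert (0 < / eps) by (apply Rinv_0_lt_compat; lra).
  apply Rlt_le_trans with (/ / eps).
  - apply Rinv_lt_contravar. apply Rmult_lt_0_compat. lra. apply exp_pos. lra.
  - rewrite Rinv_inv. lra.
Qed.

Lemma Gz_lim m : filterlim (Gz m) (Rbar_locally m_infty) (locally 0).
Proof.
  apply flim_ext_loc with (fun z => 4 ^ (S m) / sqrt 2 * Pm m ((1 + - sqrt (1 + - exp (- (/2 * z ^ 2)))) * / 2)).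
  { exists 0. intros z Hz. unfold Gz, tf. destruct (Rlt_dec z 0); [|lra]. unfold sf. reflexivity. }
  apply flim_eq with (4 ^ (S m) / sqrt 2 * Pm m ((1 + - sqrt (1 + - 0)) * / 2)).
  { replace ((1 + - sqrt (1 + - 0)) * / 2) with 0. rewrite Pm0. toR; ring.
    replace (1 + - 0) with 1 by ring. rewrite sqrt_1. field. }
  apply flim_scal_const. apply flim_cont. 2: apply Pm_cont.
  apply flim_mult. 2: apply flim_const.
  apply flim_plus. apply flim_const. apply flim_opp.
  apply flim_cont. 2: apply continuous_sqrt.
  apply flim_plus. apply flim_const. apply flim_opp. apply e_lim_m.
Qed.

Lemma tf_eta (y eta : R) : 0 < y < 1 -> - (/2 * eta ^ 2) = ln (4 * y * (1 - y)) ->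
  (eta < 0 <-> /2 < y) -> tf eta = 1 - y.
Proof.
  intros Hy Hl Hn.
  assert (He : exp (- (/2 * eta ^ 2)) = 4 * y * (1 - y)).
  { rewrite Hl. apply exp_ln. nra. }
  unfold tf, sf. rewrite He.
  replace (1 - 4 * y * (1 - y)) with ((1 - 2 * y) ^ 2) by ring.
  destruct (Rlt_dec eta 0) as [E|E].
  - apply Hn in E. replace ((1 - 2 * y) ^ 2) with ((2 * y - 1) ^ 2) by ring.
    rewrite sqrt_pow2 by lra. field.
  - assert (y <= /2). { destruct (Rle_dec y (/2)); auto. exfalso. apply E. apply Hn. lra. }
    rewrite sqrt_pow2 by lra. field.
Qed.

Lemma beta_int m x : 0 < x < 1 ->
  RInt_gen (fun t => Rpower t (INR (S m) - 1) * Rpower (1 - t) (INR (S m) - 1)) (at_right 0) (at_point x) = Pm m x.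
Proof.
  intros Hx. apply is_RInt_gen_unique.
  replace (Pm m x) with (Pm m x - Pm m 0) by (rewrite Pm0; ring).
  apply (is_RInt_gen_antider _ (Pm m)).
  - apply Filter_prod with (fun a => 0 < a < 1) (fun b => b = x).
    + unfold at_right, within. exists (mkposreal 1 Rlt_0_1). intros a Ha Hp.
      change (Rabs (a - 0) < 1) in Ha. rewrite Rminus_0_r in Ha. apply Rabs_lt_between in Ha. lra.
    + reflexivity.
    + intros a b Ha Hb. simpl. subst b.
      apply is_RInt_ext_R with (pw m).
      * intros t Ht. assert (0 < t < 1).
        { destruct (Rle_dec a x); [rewrite Rmin_left, Rmax_right in Ht|rewrite Rmin_right, Rmax_left in Ht]; lra. }
        change (match m with 0%nat => 1 | S _ => INR m + 1 end) with (INR (S m)). rewrite S_INR. replace (INR m + 1 - 1) with (INR m) by ring.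
        rewrite !Rpower_pow by lra. unfold pw. rewrite Rpow_mult_distr. reflexivity.
      * apply (FTC_all (Pm m)). apply Pm_cont. intros; apply Pm_deriv. apply pw_cont.
  - apply cont_right0. apply Pm_cont.
  - intros P HP. apply locally_singleton in HP. exact HP.
Qed.

Lemma Lk_pos k : 0 < Lk k.
Proof.
  induction k; simpl.
  - assert (0 < sqrt PI) by (apply sqrt_lt_R0, PI_RGT_0). lra.
  - assert (0 <= INR k) by apply pos_INR. apply Rmult_lt_0_compat; auto. lra.
Qed.

Lemma fact_id m : INR (fact (2 * m + 1)) * sqrt PI = 4 ^ (S m) * Lk (S m) * INR (fact m).
Proof.
  induction m.
  - simpl. field.
  - replace (2 * S m + 1)%nat with (S (S (2 * m + 1))) by lia.
    rewrite !fact_simpl, !mult_INR.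
    transitivity (INR (S (S (2 * m + 1))) * INR (S (2 * m + 1)) * (INR (fact (2 * m + 1)) * sqrt PI)).
    ring. rewrite IHm.
    change (Lk (S (S m))) with ((2 * INR (S m) + 1) / 2 * Lk (S m)).
    rewrite !S_INR, plus_INR, mult_INR. simpl INR. simpl pow. toR. field.
Qed.

Theorem mainTheorem3 (N : nat) (y eta : R) :
  (1 <= N)%nat -> 0 < y < 1 ->
  - (/2 * eta ^ 2) = ln (4 * y * (1 - y)) ->
  (0 < eta <-> y < /2) -> (eta < 0 <-> /2 < y) ->
  exists J : R,
    is_RInt_gen (fun z => exp (- (/2 * INR N * z ^ 2)) * phi z)
      (Rbar_locally m_infty) (at_point eta) J /\
    incBeta (1 - y) (INR N) (INR N)
      = sqrt (INR N / (2 * PI)) * PhiN (INR N) * J.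
Proof.
  intros HN Hy Hl Hp Hn.
  destruct N as [|m]; [lia|].
  exists (Gz m eta). split.
  - replace (Gz m eta) with (Gz m eta - 0) by ring.
    apply (is_RInt_gen_antider (gz (S m)) (Gz m)).
    + apply Filter_prod with (fun _ => True) (fun _ => True).
      * apply filter_true. * apply filter_true.
      * intros a b _ _. apply Gz_RInt.
    + apply Gz_lim.
    + intros P HP. apply locally_singleton in HP. exact HP.
  - unfold incBeta, Beta, PhiN.
    rewrite beta_int by lra.
    replace (INR (S m) + INR (S m)) with (INR (S (2 * m + 1))) by (rewrite <- plus_INR; f_equal; lia).
    rewrite !Gamma_nat, Gamma_half.
    unfold Gz. rewrite (tf_eta y eta) by auto.
    assert (Fi := fact_id m).
    assert (HPI : 0 < PI) by apply PI_RGT_0.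
    assert (Hs2 : 0 < sqrt 2) by (apply sqrt_lt_R0; lra).
    assert (HsP : 0 < sqrt PI) by (apply sqrt_lt_R0; lra).
    assert (Hn0 : 0 < INR (S m)) by (apply lt_0_INR; lia).
    assert (HsN : 0 < sqrt (INR (S m))) by (apply sqrt_lt_R0; lra).
    assert (HF : 0 < INR (fact m)) by apply INR_fact_lt_0.
    assert (HL := Lk_pos (S m)).
    assert (H4 : 0 < 4 ^ S m) by (apply pow_lt; lra).
    rewrite sqrt_div_alt by lra. rewrite sqrt_mult_alt by lra.
    replace (INR (fact (2 * m + 1))) with (4 ^ S m * Lk (S m) * INR (fact m) / sqrt PI)
      by (rewrite <- Fi; field; lra).
    toR.
    replace (sqrt (INR (S m)) / (sqrt 2 * sqrt PI) * (/ sqrt (INR (S m)) * (2 * Lk (S m) / INR (fact m))) *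
      (4 ^ S m / sqrt 2 * Pm m (1 - y))) with
      (2 / (sqrt 2 * sqrt 2) * (4 ^ S m * Lk (S m) * Pm m (1 - y) / (sqrt PI * INR (fact m))))
      by (field; repeat split; lra).
    rewrite sqrt_sqrt by lra. field. repeat split; lra.
Qed.
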